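(* Let $\mathcal{C}$ be a class of instances that is closed under homomorphic equivalence, and let $\mathcal{F}$ be a finite set of connected instances. Then $\mathcal{C}$ admits a left query algorithm over $\mathbb{N}$ of the form $(\mathcal{F},X)$ for some set $X$ if and only if $\mathcal{C}$ admits a left query algorithm over $\mathbb{B}$ of the form $(\mathcal{F},X')$ for some set $X'$.
   Context: A schema is a finite set of relation symbols, each with a positive arity. An instance $A$ over a schema $\sigma$ assigns to each $R\in\sigma$ of arity $r$ a finite $r$-ary relation $R^A$; its facts are the tuples in these relations, and $\mathrm{adom}(A)$ is the set of elements occurring in its facts. A homomorphism $h:A\to B$ is a map $h:\mathrm{adom}(A)\to\mathrm{adom}(B)$ preserving every relation; we write $A\to B$ if one exists. $A,B$ are homomorphically equivalent if $A\to B$ and $B\to A$. A class of instances is a collection of instances over a fixed schema closed under isomorphism; it is closed under homomorphic equivalence if $A\in\mathcal{C}$ and $A,B$ homomorphically equivalent imply $B\in\mathcal{C}$. $\hom_{\mathbb{N}}(A,B)$ is the number of homomorphisms $A\to B$; $\hom_{\mathbb{B}}(A,B)=1$ if $A\to B$ and $0$ otherwise. For $\mathcal{F}=\{F_1,\dots,F_k\}$, $\hom_K(\mathcal{F},A)=(\hom_K(F_i,A))_{i\le k}$. A left $k$-query algorithm over $K\in\{\mathbb{B},\mathbb{N}\}$ for $\mathcal{C}$ is a pair $(\mathcal{F},X)$ with $|\mathcal{F}|=k$ and $X$ a set of $k$-tuples over $K$ (no effectiveness required) such that for every instance $D$: $D\in\mathcal{C}$ iff $\hom_K(\mathcal{F},D)\in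 X$. An instance is connected if its incidence multigraph (bipartite, with parts $\mathrm{adom}(A)$ and the set of facts, an edge joining an element to a fact for each occurrence of the element in the fact) restricted to connectivity between elements is connected, i.e. any two elements of $\mathrm{adom}(A)$ are linked by a chain of facts consecutively sharing elements. *)

(* Defs.v *)
From mathcomp Require Import all_boot.
From Stdlib Require List.
Set Implicit Arguments. Unset Strict Implicit. Unset Printing Implicit Defensive.

Record schema := Schema {
  sym : finType;
  arity : sym -> nat;
  arity_pos : forall R, 0 < arity R }.

Notation fact s := {R : sym s & (arity R).-tuple nat}.

(* An instance: a finite set of facts (given by a list; duplicates and order
   are irrelevant for everything below). Every finite instance is isomorphic
   to one whose elements are natural numbers. *)
Record instance (s : schema) := Instance { facts : seq (fact s) }.

Section Defs.
Variable s : schema.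
Implicit Types A B D : instance s.

Definition adom A : seq nat :=
  undup (flatten [seq tval (tagged f) | f : fact s <- facts A]).

Definition adomT A : finType := seq_sub (adom A).

Definition ext A B (g : {ffun adomT A -> adomT B}) (x : nat) : nat :=
  match (insub x : option (adomT A)) with
  | Some y => val (g y)
  | None => x
  end.

Definition is_hom A B (g : {ffun adomT A -> adomT B}) : bool :=
  all (fun f : fact s => (existT _ (tag f) (map_tuple (ext g) (tagged f)) : fact s)
                          \in facts B) (facts A).

Definition homN A B : nat := #|[pred g : {ffun adomT A -> adomT B} | is_hom g]|.

Definition homB A B : bool := [exists g : {ffun adomT A -> adomT B}, is_hom g].

Definition hom_equiv A B : Prop := homB A B /\ homB B A.

Definition closed_hom_equiv (C : instance s -> Prop) : Prop :=
  forall A B, C A -> hom_equiv A B -> C B.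

Definition share_fact A : rel (adomT A) :=
  fun x y => has (fun f : fact s => (val x \in tval (tagged f)) && (val y \in tval (tagged f)))
                 (facts A).

Definition connected A : Prop := forall x y : adomT A, connect (@share_fact A) x y.

Definition homN_vec (F : seq (instance s)) D : seq nat := [seq homN Fi D | Fi <- F].
Definition homB_vec (F : seq (instance s)) D : seq bool := [seq homB Fi D | Fi <- F].

Definition left_qa_N (C : instance s -> Prop) (F : seq (instance s))
  (X : seq nat -> Prop) : Prop := forall D, C D <-> X (homN_vec F D).

Definition left_qa_B (C : instance s -> Prop) (F : seq (instance s))
  (X : seq bool -> Prop) : Prop := forall D, C D <-> X (homB_vec F D).

End Defs.

(* Main.v *)
Require Import Defs.
From mathcomp Require Import all_boot zify.
From Stdlib Require List.
Set Implicit Arguments. Unset Strict Implicit. Unset Printing Implicit Defensive.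


Inductive expr := E0 | EZ | ED | ED' | Eplus of expr & expr | Etimes of expr & expr.

Fixpoint eval (a b : nat) (e : expr) : nat :=
  match e with
  | E0 => 0 | EZ => a * b | ED => a | ED' => b
  | Eplus e1 e2 => eval a b e1 + eval a b e2
  | Etimes e1 e2 => eval a b e1 * eval a b e2
  end.

Fixpoint good (e : expr) : bool :=
  match e with
  | E0 => true | EZ => true | ED => false | ED' => false
  | Eplus e1 e2 => good e1 && good e2
  | Etimes e1 e2 => good e1 || good e2
  end.

Definition emul n e := iter n (Eplus e) E0.

Lemma eval_plus a b x y : eval a b (Eplus x y) = eval a b x + eval a b y.
Proof. by []. Qed.

Lemma eval_emul a b n e : eval a b (emul n e) = n * eval a b e.
Proof. by elim: n => //= n IH; rewrite IH mulSn. Qed.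

Lemma good_emul n e : good e -> good (emul n e).
Proof. by move=> g; elim: n => //= n ->; rewrite g. Qed.

Lemma good_eval0 e : good e -> eval 0 0 e = 0.
Proof.
elim: e => //= e1 IH1 e2 IH2.
  by case/andP => /IH1 -> /IH2 ->.
by case/orP => [/IH1 ->|/IH2 ->]; rewrite ?muln0.
Qed.

Lemma arith1 x1 x2 y1 y2 : x1 != x2 -> y1 != y2 -> x1 * y1 + x2 * y2 != x1 * y2 + x2 * y1.
Proof.
move=> /eqP h1 /eqP h2; apply/eqP => E.
have : (x1 - x2) * (y1 - y2) + (x2 - x1) * (y2 - y1) = (x1 - x2) * (y2 - y1) + (x2 - x1) * (y1 - y2).
  nia.
case: (ltngtP x1 x2) h1 => // c1 _; case: (ltngtP y1 y2) h2 => // c2 _; nia.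
Qed.

Lemma killer (p : nat * nat) (ps : seq (nat * nat)) : 0 < p.1 -> 0 < p.2 ->
  exists P Q, [/\ good P, good Q, eval p.1 p.2 P != eval p.1 p.2 Q &
     forall q, q \in ps -> q != p -> eval q.1 q.2 P = eval q.1 q.2 Q].
Proof.
move=> p1 p2; elim: ps => [|q ps [P1 [Q1 [g1 g1' n1 e1]]]].
  by exists EZ, E0; split => //=; rewrite -lt0n muln_gt0 p1.
case: (eqVneq q p) => [qp | qp].
  exists P1, Q1; split => // r; rewrite inE => /orP [/eqP -> | rin]; last exact: e1.
  by rewrite qp eqxx.
have [P2 [Q2 [g2 g2' n2 e2]]] : exists P2 Q2, [/\ good P2, good Q2,
    eval p.1 p.2 P2 != eval p.1 p.2 Q2 & eval q.1 q.2 P2 = eval q.1 q.2 Q2].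
  case: (eqVneq q.1 p.1) => E1.
    have E2 : q.2 != p.2.
      by apply: contraNneq qp => E2; rewrite [q]surjective_pairing E1 E2 -surjective_pairing.
    exists (Etimes EZ ED'), (emul q.2 EZ); split => //=; rewrite ?good_emul // !eval_emul /=.
      by rewrite [X in _ != X]mulnC eqn_pmul2l ?muln_gt0 ?p1 // eq_sym.
    by rewrite mulnC.
  exists (Etimes EZ ED), (emul q.1 EZ); split => //=; rewrite ?good_emul // !eval_emul /=.
    by rewrite [X in _ != X]mulnC eqn_pmul2l ?muln_gt0 ?p1 // eq_sym.
  by rewrite mulnC.
exists (Eplus (Etimes P1 P2) (Etimes Q1 Q2)), (Eplus (Etimes P1 Q2) (Etimes Q1 P2)).
split => /=; rewrite ?g1 ?g1' //; first exact: arith1.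
move=> r; rewrite inE => /orP [/eqP -> _ | rin rp]; first by rewrite e2 addnC.
by rewrite e1 // addnC.
Qed.

Lemma arith2 A B x y : x != y -> exists c m (sw : bool),
  0 < c /\ c * A + m * (if sw then y else x) = c * B + m * (if sw then x else y).
Proof.
move=> nxy.
wlog xy : x y nxy / x < y.
  move=> W; case: (ltngtP x y) nxy => [c _|c _|]; last by move=> _.
    by apply: (W x y) => //; rewrite ltn_eqF.
  have [c1 [m [sw [c0 E]]]] := W y x (negbT (ltn_eqF c)) c.
  by exists c1, m, (~~ sw); split => //; case: sw E.
have [d yE] : exists d, y = x + d by exists (y - x); rewrite subnKC // ltnW.
have d0 : 0 < d by move: xy; rewrite yE; lia.
subst y.
case: (leqP A B) => c2.
  have [e BE] : exists e, B = A + e by exists (B - A); rewrite subnKC.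
  subst B; exists d, e, true; split => //; lia.
have [e AE] : exists e, A = B + e by exists (A - B); rewrite subnKC // ltnW.
subst A; exists d, e, false; split => //; lia.
Qed.

Lemma solve (ps : seq (nat * nat)) : (forall p, p \in ps -> (p.1 == 0) = (p.2 == 0)) ->
  exists L U W, [/\ 0 < L, good U, good W &
    forall p, p \in ps -> L * p.1 + eval p.1 p.2 U = L * p.2 + eval p.1 p.2 W].
Proof.
elim: ps => [_|p ps IH H]; first by exists 1, E0, E0.
have [L [U [W [L0 gU gW E]]]] : exists L U W, [/\ 0 < L, good U, good W &
    forall p, p \in ps -> L * p.1 + eval p.1 p.2 U = L * p.2 + eval p.1 p.2 W].
  by apply: IH => q qin; apply: H; rewrite inE qin orbT.
have Hp := H p (mem_head _ _).
case: (posnP p.1) => p1.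
  have p2 : p.2 = 0 by apply/eqP; rewrite -Hp p1.
  exists L, U, W; split => // q; rewrite inE => /orP [/eqP -> | qin]; last exact: E.
  by rewrite p1 p2 !good_eval0.
have p2 : 0 < p.2 by rewrite lt0n -Hp -lt0n.
have [P [Q [gP gQ nPQ EPQ]]] := killer ps p1 p2.
have [c [m [sw [c0 Ec]]]] := arith2 (L * p.1 + eval p.1 p.2 U) (L * p.2 + eval p.1 p.2 W) nPQ.
exists (c * L), (Eplus (emul c U) (emul m (if sw then Q else P))),
  (Eplus (emul c W) (emul m (if sw then P else Q))).
split; rewrite /= ?muln_gt0 ?c0 ?L0 ?good_emul //; try by case: (sw).
move=> q; rewrite inE; case: (eqVneq q p) => [-> _ | qp /= qin].
  rewrite /= !eval_emul.
  case: (sw) Ec => /= Ec; rewrite !mulnDr !mulnA in Ec; by rewrite !addnA Ec.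
rewrite /= !eval_emul.
have -> : eval q.1 q.2 (if sw then Q else P) = eval q.1 q.2 (if sw then P else Q).
  by case: (sw); rewrite EPQ.
have E' := congr1 (muln c) (E q qin).
rewrite /= !mulnDr !mulnA in E'.
by rewrite !addnA E'.
Qed.

Section Work.
Variable s : schema.
Implicit Types A B D X Y : instance s.

Definition fview (f : fact s) : sym s * seq nat := (tag f, tval (tagged f)).

Lemma fview_inj : injective fview.
Proof.
case=> R1 t1 [R2 t2]; rewrite /fview /= => [[e1 e2]].
subst R2; congr existT; exact: val_inj.
Qed.

Definition fs A := map fview (facts A).

Lemma fs_size A p : p \in fs A -> size p.2 = arity p.1.
Proof. by case/mapP=> f _ ->; rewrite /= size_tuple. Qed.

Definition hom_nat A B (h : nat -> nat) :=
  all (fun p => (p.1, map h p.2) \in fs B) (fs A).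

Lemma is_homE A B (g : {ffun adomT A -> adomT B}) : is_hom g = hom_nat A B (ext g).
Proof.
rewrite /is_hom /hom_nat all_map; apply: eq_all => f /=.
by rewrite -(mem_map fview_inj).
Qed.

Lemma adomE A x : (x \in adom A) = has (fun p => x \in p.2) (fs A).
Proof.
rewrite /adom mem_undup /fs has_map.
apply/flattenP/hasP => [[l /mapP [f fin ->] xin]|[f fin xin]].
  by exists f.
by exists (tval (tagged f)) => //; apply: map_f.
Qed.

Lemma adom_fs A p x : p \in fs A -> x \in p.2 -> x \in adom A.
Proof. by move=> pin xin; rewrite adomE; apply/hasP; exists p. Qed.

Lemma hom_nat_eq A B h1 h2 : {in adom A, h1 =1 h2} -> hom_nat A B h1 = hom_nat A B h2.
Proof.
move=> e; apply: eq_in_all => p pin.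
suff -> : map h1 p.2 = map h2 p.2 by [].
by apply/eq_in_map => x xin; apply: e; exact: adom_fs xin.
Qed.

Lemma hom_nat_range A B h x : hom_nat A B h -> x \in adom A -> h x \in adom B.
Proof.
move=> /allP H; rewrite adomE => /hasP [p pin xin].
by apply: (adom_fs (H p pin)); rewrite /= map_f.
Qed.

Definition lookup A (l : seq nat) x := nth 0 l (index x (adom A)).

Lemma lookup_map A h x : x \in adom A -> lookup A (map h (adom A)) x = h x.
Proof. by move=> xin; rewrite /lookup (nth_map 0) ?index_mem // nth_index. Qed.

Lemma lookupK A l : size l = size (adom A) -> map (lookup A l) (adom A) = l.
Proof.
move=> sz; apply: (eq_from_nth (x0 := 0)); rewrite size_map // => i lt.
rewrite (nth_map 0) // /lookup index_uniq //; exact: undup_uniq.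
Qed.

Definition valid A B (l : seq nat) := (size l == size (adom A)) && hom_nat A B (lookup A l).

Definition homlist A B : seq (seq nat) :=
  [seq map (ext g) (adom A) | g <- enum [pred g : {ffun adomT A -> adomT B} | is_hom g]].

Lemma ext_val A B (g : {ffun adomT A -> adomT B}) (y : adomT A) : ext g (val y) = val (g y).
Proof. by rewrite /ext valK. Qed.

Lemma homlist_size A B : size (homlist A B) = homN A B.
Proof. by rewrite size_map /homN cardE. Qed.

Lemma homlist_uniq A B : uniq (homlist A B).
Proof.
rewrite map_inj_uniq ?enum_uniq // => g1 g2 /eq_in_map e.
apply/ffunP => y; apply: val_inj; rewrite -!ext_val; apply: e; exact: valP.
Qed.

Lemma homlistP A B l : (l \in homlist A B) = valid A B l.
Proof.
apply/mapP/andP => [[g]|[/eqP sz H]].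
  rewrite mem_enum inE => hg ->; split; first by rewrite size_map.
  rewrite (@hom_nat_eq _ _ _ (ext g)) -?is_homE // => x xin.
  by rewrite lookup_map.
have Hr (y : adomT A) : lookup A l (val y) \in adom B.
  by apply: hom_nat_range H _; exact: valP.
exists [ffun y => SeqSub (Hr y)].
  rewrite mem_enum inE is_homE; rewrite (@hom_nat_eq _ _ _ (lookup A l)) //.
  move=> x xin; have -> : x = val (SeqSub xin : adomT A) by [].
  by rewrite ext_val ffunE.
rewrite -{1}(lookupK sz); apply/eq_in_map => x xin.
have -> : x = val (SeqSub xin : adomT A) by [].
by rewrite ext_val ffunE.
Qed.

Lemma homN_eq A B (l : seq (seq nat)) : uniq l -> (forall t, (t \in l) = valid A B t) ->
  homN A B = size l.
Proof.
move=> u e; rewrite -homlist_size; apply: perm_size; apply: uniq_perm => //.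
  exact: homlist_uniq.
by move=> t; rewrite homlistP e.
Qed.

Lemma homB_homN A B : homB A B = (0 < homN A B).
Proof.
rewrite /homB /homN; apply/existsP/card_gt0P => [[g hg]|[g hg]]; by exists g.
Qed.

Lemma homB_hom_nat A B : homB A B <-> exists h, hom_nat A B h.
Proof.
split.
  by move/existsP=> [g hg]; exists (ext g); rewrite -is_homE.
move=> [h hh]; rewrite homB_homN -homlist_size.
have : map h (adom A) \in homlist A B.
  rewrite homlistP /valid size_map eqxx /=.
  by rewrite (@hom_nat_eq _ _ _ h) // => x xin; rewrite lookup_map.
by case: (homlist A B).
Qed.


Lemma hom_natP A B h : reflect (forall p, p \in fs A -> (p.1, map h p.2) \in fs B) (hom_nat A B h).
Proof. exact: allP. Qed.

Definition mkfact (R : sym s) (l : seq nat) : fact s :=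
  existT (fun R => (arity R).-tuple nat) R (insubd (nseq_tuple (arity R) 0) l).
Definition wf (ps : seq (sym s * seq nat)) := all (fun p => size p.2 == arity p.1) ps.
Definition inst_of ps := @Instance s [seq mkfact p.1 p.2 | p <- ps].

Lemma fs_inst_of ps : wf ps -> fs (inst_of ps) = ps.
Proof.
move=> /allP H; rewrite /fs /inst_of -map_comp -[RHS]map_id; apply/eq_in_map.
case=> R l pin /=; rewrite /fview /= val_insubd.
by have /= -> := H _ pin.
Qed.

Definition d0 n := n.*2.
Definition d1 n := n.*2.+1.
Definition dunion X Y := inst_of ([seq (p.1, map d0 p.2) | p <- fs X] ++ [seq (p.1, map d1 p.2) | p <- fs Y]).
Definition zipw (l1 l2 : seq nat) := map (fun z : nat * nat => pickle z) (zip l1 l2).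
Definition prod X Y := inst_of [seq (p.1, zipw p.2 q.2) | p <- fs X, q <- [seq q <- fs Y | q.1 == p.1]].
Definition empty := @Instance s [::].

Lemma fs_dunion X Y : fs (dunion X Y) = [seq (p.1, map d0 p.2) | p <- fs X] ++ [seq (p.1, map d1 p.2) | p <- fs Y].
Proof.
apply: fs_inst_of; apply/allP => z; rewrite mem_cat => /orP [] /mapP [p pin ->] /=;
by rewrite size_map (fs_size pin).
Qed.

Lemma size_zipw l1 l2 : size (zipw l1 l2) = minn (size l1) (size l2).
Proof. by rewrite size_map size_zip. Qed.

Lemma fs_prod X Y : fs (prod X Y) = [seq (p.1, zipw p.2 q.2) | p <- fs X, q <- [seq q <- fs Y | q.1 == p.1]].
Proof.
apply: fs_inst_of; apply/allP => z /allpairsPdep [p [q [pin qin ->]]] /=.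
move: qin; rewrite mem_filter => /andP [/eqP e qin].
by rewrite size_zipw (fs_size pin) (fs_size qin) e minnn.
Qed.

Lemma fs_empty : fs empty = [::]. Proof. by []. Qed.

Lemma hom_nat_id A : hom_nat A A id.
Proof. by apply/hom_natP => p pin; rewrite map_id -surjective_pairing. Qed.

Lemma hom_nat_comp A B T h k : hom_nat A B h -> hom_nat B T k -> hom_nat A T (k \o h).
Proof.
move=> /hom_natP H1 /hom_natP H2; apply/hom_natP => p pin.
by have := H2 _ (H1 _ pin); rewrite /= map_comp.
Qed.

Lemma hom_d0 X Y : hom_nat X (dunion X Y) d0.
Proof.
by apply/hom_natP => p pin; rewrite fs_dunion mem_cat (map_f (fun p => (p.1, map d0 p.2))).
Qed.

Lemma hom_d1 X Y : hom_nat Y (dunion X Y) d1.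
Proof.
apply/hom_natP => p pin; rewrite fs_dunion mem_cat (map_f (fun p => (p.1, map d1 p.2))) //.
by rewrite orbT.
Qed.

Definition dsel (hx hy : nat -> nat) n := if odd n then hy n./2 else hx n./2.

Lemma hom_dunion_src X Y T hx hy : hom_nat X T hx -> hom_nat Y T hy ->
  hom_nat (dunion X Y) T (dsel hx hy).
Proof.
move=> /hom_natP H1 /hom_natP H2; apply/hom_natP => z; rewrite fs_dunion mem_cat.
case/orP => /mapP [p pin ->] /=; rewrite -map_comp.
  suff -> : map (dsel hx hy \o d0) p.2 = map hx p.2 by exact: H1.
  by apply: eq_map => n; rewrite /dsel /= /d0 odd_double doubleK.
suff -> : map (dsel hx hy \o d1) p.2 = map hy p.2 by exact: H2.
by apply: eq_map => n; rewrite /dsel /= /d1 /= odd_double /= uphalf_double.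
Qed.

Definition pi1 n := (odflt (0, 0) (unpickle n)).1.
Definition pi2 n := (odflt (0, 0) (unpickle n)).2.

Lemma zipw_pi1 l1 l2 : size l1 = size l2 -> map pi1 (zipw l1 l2) = l1.
Proof.
move=> e; rewrite /zipw -map_comp.
rewrite (@eq_map _ _ _ fst); last by move=> z; rewrite /pi1 /= pickleK.
by rewrite -/(unzip1 _) unzip1_zip // e.
Qed.

Lemma zipw_pi2 l1 l2 : size l1 = size l2 -> map pi2 (zipw l1 l2) = l2.
Proof.
move=> e; rewrite /zipw -map_comp.
rewrite (@eq_map _ _ _ snd); last by move=> z; rewrite /pi2 /= pickleK.
by rewrite -/(unzip2 _) unzip2_zip // e.
Qed.

Lemma hom_pi1 X Y : hom_nat (prod X Y) X pi1.
Proof.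
apply/hom_natP => z; rewrite fs_prod => /allpairsPdep [p [q [pin qin ->]]] /=.
move: qin; rewrite mem_filter => /andP [/eqP e qin].
by rewrite zipw_pi1 ?(fs_size pin) ?(fs_size qin) ?e // -surjective_pairing.
Qed.

Lemma hom_pi2 X Y : hom_nat (prod X Y) Y pi2.
Proof.
apply/hom_natP => z; rewrite fs_prod => /allpairsPdep [p [q [pin qin ->]]] /=.
move: qin; rewrite mem_filter => /andP [/eqP e qin].
by rewrite zipw_pi2 ?(fs_size pin) ?(fs_size qin) ?e // -e -surjective_pairing.
Qed.

Lemma hom_empty T h : hom_nat empty T h.
Proof. by []. Qed.

Lemma homB_trans A B T : homB A B -> homB B T -> homB A T.
Proof.
move=> /homB_hom_nat [h hh] /homB_hom_nat [k hk]; apply/homB_hom_nat.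
by exists (k \o h); exact: hom_nat_comp hh hk.
Qed.

Lemma homB_refl A : homB A A.
Proof. by apply/homB_hom_nat; exists id; exact: hom_nat_id. Qed.

Lemma homB_d0 X Y : homB X (dunion X Y).
Proof. by apply/homB_hom_nat; exists d0; exact: hom_d0. Qed.

Lemma homB_dunion_src X Y T : homB X T -> homB Y T -> homB (dunion X Y) T.
Proof.
move=> /homB_hom_nat [h hh] /homB_hom_nat [k hk]; apply/homB_hom_nat.
by exists (dsel h k); exact: hom_dunion_src.
Qed.

Lemma homB_prodL X Y T : homB X T -> homB (prod X Y) T.
Proof.
move=> H; apply: homB_trans H; apply/homB_hom_nat; exists pi1; exact: hom_pi1.
Qed.

Lemma homB_prodR X Y T : homB Y T -> homB (prod X Y) T.
Proof.
move=> H; apply: homB_trans H; apply/homB_hom_nat; exists pi2; exact: hom_pi2.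
Qed.

Lemma homB_empty T : homB empty T.
Proof. by apply/homB_hom_nat; exists id. Qed.


Lemma lookup_mapf A (f : nat -> nat) l x : size l = size (adom A) -> x \in adom A ->
  lookup A (map f l) x = f (lookup A l x).
Proof. by move=> sz xin; rewrite /lookup (nth_map 0) // sz index_mem. Qed.

Lemma lookup_zipw A l1 l2 x : size l1 = size (adom A) -> size l2 = size (adom A) -> x \in adom A ->
  lookup A (zipw l1 l2) x = pickle (lookup A l1 x, lookup A l2 x).
Proof.
move=> s1 s2 xin; rewrite /lookup /zipw (nth_map (0, 0)); last first.
  by rewrite size_zip s1 s2 minnn index_mem.
by rewrite nth_zip // s1 s2.
Qed.

Lemma fs_nonempty A p : p \in fs A -> exists x, x \in p.2.
Proof.
move=> pin; have := arity_pos p.1; rewrite -(fs_size pin).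
by case: p.2 => // x l _; exists x; rewrite inE eqxx.
Qed.

Lemma adom_nil_fs A : adom A = [::] -> fs A = [::].
Proof.
move=> e; case E: (fs A) => [|p l] //.
have pin : p \in fs A by rewrite E inE eqxx.
have [x xin] := fs_nonempty pin.
by have := adom_fs pin xin; rewrite e.
Qed.

Lemma homN_empty_src A B : adom A = [::] -> homN A B = 1.
Proof.
move=> e; rewrite (@homN_eq _ _ [:: [::]]) // => t.
rewrite /valid /hom_nat (adom_nil_fs e) inE /= andbT.
by rewrite e; case: t.
Qed.

Lemma homN_empty_tgt A : adom A != [::] -> homN A empty = 0.
Proof.
move=> ne; rewrite (@homN_eq _ _ [::]) // => t.
rewrite /valid /hom_nat; case E: (fs A) => [|p l].
  by move: ne; rewrite /adom /fs in E *; case: (facts A) E.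
by rewrite /= andbF.
Qed.

Lemma valid_size A B t : valid A B t -> size t = size (adom A).
Proof. by case/andP => /eqP. Qed.

Lemma pi_adom_prod X Y n : n \in adom (prod X Y) -> pickle (pi1 n, pi2 n) = n.
Proof.
rewrite adomE => /hasP [q]; rewrite fs_prod => /allpairsPdep [p [r [_ _ ->]]] /=.
by case/mapP => z _ ->; rewrite /pi1 /pi2 pickleK /= -surjective_pairing.
Qed.

Lemma homN_prod F X Y : homN F (prod X Y) = homN F X * homN F Y.
Proof.
rewrite -(homlist_size F X) -(homlist_size F Y) -(size_allpairs zipw); apply: homN_eq.
  apply: allpairs_uniq; try exact: homlist_uniq.
  move=> [a b] [c d] /allpairsP [[a' b'] [ain bin [-> ->]]] /allpairsP [[c' d'] [cin din [-> ->]]] /= e.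
  move: ain bin cin din; rewrite !homlistP => /valid_size sa /valid_size sb /valid_size sc /valid_size sd.
  simpl in sa, sb, sc, sd, e.
  have sab := etrans sa (esym sb); have scd := etrans sc (esym sd).
  congr pair.
    by rewrite -(zipw_pi1 sab) e zipw_pi1.
  by rewrite -(zipw_pi2 sab) e zipw_pi2.
move=> t; apply/idP/idP.
  case/allpairsP => [[t1 t2] [t1in t2in ->]] /=.
  move: t1in t2in; rewrite !homlistP => /andP [/eqP s1 H1] /andP [/eqP s2 H2].
  rewrite /valid size_zipw s1 s2 minnn eqxx /=.
  rewrite (@hom_nat_eq _ _ _ (fun x => pickle (lookup F t1 x, lookup F t2 x))); last first.
    by move=> x xin; rewrite lookup_zipw.
  apply/hom_natP => p pin; rewrite fs_prod.
  have -> : map (fun x => pickle (lookup F t1 x, lookup F t2 x)) p.2 =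
            zipw (map (lookup F t1) p.2) (map (lookup F t2) p.2) by rewrite /zipw zip_map -map_comp.
  apply/allpairsPdep; exists (p.1, map (lookup F t1) p.2), (p.1, map (lookup F t2) p.2); split => //.
    exact: (hom_natP _ _ _ H1).
  by rewrite mem_filter eqxx /=; exact: (hom_natP _ _ _ H2).
case/andP => /eqP sz H.
have Ht n : n \in t -> pickle (pi1 n, pi2 n) = n.
  rewrite -(lookupK sz) => /mapP [x xin ->]; apply: pi_adom_prod.
  exact: hom_nat_range H xin.
have -> : t = zipw (map pi1 t) (map pi2 t).
  rewrite /zipw zip_map -map_comp -[LHS]map_id; apply/eq_in_map => n nin /=.
  by rewrite Ht.
apply: allpairs_f; rewrite homlistP /valid size_map sz eqxx /=.
  rewrite (@hom_nat_eq _ _ _ (pi1 \o lookup F t)); first exact: hom_nat_comp H (hom_pi1 _ _).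
  by move=> x xin; rewrite lookup_mapf.
rewrite (@hom_nat_eq _ _ _ (pi2 \o lookup F t)); first exact: hom_nat_comp H (hom_pi2 _ _).
by move=> x xin; rewrite lookup_mapf.
Qed.


Lemma dpar X Y q m n : q \in fs (dunion X Y) -> m \in q.2 -> n \in q.2 -> odd m = odd n.
Proof.
rewrite fs_dunion mem_cat => /orP [] /mapP [r _ ->] /= /mapP [a _ ->] /mapP [b _ ->];
by rewrite /d0 /d1 /= !odd_double.
Qed.

Lemma extract F Z d b (S : seq (sym s * seq nat)) h :
  (forall n, (d n)./2 = n) ->
  (forall q, q \in S -> forall m, m \in q.2 -> odd m = ~~ b) ->
  (forall x, x \in adom F -> odd (h x) = b) ->
  (forall p, p \in fs F -> ((p.1, map h p.2) \in [seq (p.1, map d p.2) | p <- fs Z]) || ((p.1, map h p.2) \in S)) ->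
  hom_nat F Z (half \o h).
Proof.
move=> dK HS Hp H; apply/hom_natP => p pin.
case/orP: (H p pin) => [/mapP [r rin [e1 e2]] | hin].
  have -> : map (half \o h) p.2 = r.2.
    by rewrite map_comp e2 -map_comp -[RHS]map_id; apply: eq_map.
  by rewrite e1 -surjective_pairing.
have [x xin] := fs_nonempty pin.
have := HS _ hin (h x) (map_f h xin); rewrite (Hp x (adom_fs pin xin)).
by case: (b).
Qed.

Lemma homN_dunion F X Y : connected F -> adom F != [::] ->
  homN F (dunion X Y) = homN F X + homN F Y.
Proof.
move=> cF ne.
have szl Z t : t \in homlist F Z -> size t = size (adom F) by rewrite homlistP => /valid_size.
have [x0 x0in] : exists x0, x0 \in adom F.
  by case: (adom F) ne => // x l _; exists x; rewrite inE eqxx.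
have i0 : injective d0 := double_inj.
have i1 : injective d1 by move=> m n [] /double_inj.
rewrite -(homlist_size F X) -(homlist_size F Y) -(size_map (map d0)) -(size_map (map d1) (homlist F Y)) -size_cat.
apply: homN_eq.
  rewrite cat_uniq (map_inj_uniq (inj_map i0)) (map_inj_uniq (inj_map i1)) !homlist_uniq andbT /=.
  apply/hasPn => t /mapP [u uin ->]; apply/negP => /mapP [v vin e].
  have := szl _ _ uin; have := szl _ _ vin.
  case: u e {uin} => [|a u]; case: v {vin} => [|b v] //=; try by case: (adom F) ne.
  by case=> /(congr1 odd); rewrite /d0 /d1 /= !odd_double.
move=> t; apply/idP/idP.
  rewrite mem_cat => /orP [] /mapP [u]; rewrite homlistP => /andP [/eqP sz hu] ->;
    rewrite /valid size_map sz eqxx /=.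
    rewrite (@hom_nat_eq _ _ _ (d0 \o lookup F u)); first exact: hom_nat_comp hu (hom_d0 _ _).
    by move=> x xin; rewrite lookup_mapf.
  rewrite (@hom_nat_eq _ _ _ (d1 \o lookup F u)); first exact: hom_nat_comp hu (hom_d1 _ _).
  by move=> x xin; rewrite lookup_mapf.
case/andP => /eqP sz H.
pose h := lookup F t.
have tE : t = map h (adom F) by rewrite /h lookupK.
have Hpar x : x \in adom F -> odd (h x) = odd (h x0).
  move=> xin.
  have := @closed_connect _ (@share_fact s F) [pred z : adomT F | odd (h (val z))] _
     (SeqSub xin) (SeqSub x0in) (cF _ _).
  rewrite !inE; apply => u v; rewrite /share_fact => /hasP [f fin /andP [uin vin]].
  rewrite !inE; apply: (dpar (hom_natP _ _ _ H _ (map_f fview fin))); exact: map_f.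
have Hfs p : p \in fs F -> (p.1, map h p.2) \in fs (dunion X Y) by move=> pin; exact: (hom_natP _ _ _ H).
have vh Z : hom_nat F Z (half \o h) -> map half t \in homlist F Z.
  move=> hh; rewrite homlistP /valid size_map sz eqxx /=.
  by rewrite (@hom_nat_eq _ _ _ (half \o h)) // => x xin; rewrite lookup_mapf.
rewrite mem_cat; case E: (odd (h x0)).
  apply/orP; right; apply/mapP; exists (map half t).
    apply: vh; apply: (@extract _ _ d1 true [seq (p.1, map d0 p.2) | p <- fs X]).
    - by move=> n; rewrite /d1 /= uphalf_double.
    - by move=> q /mapP [r _ ->] m /mapP [a _ ->]; rewrite /d0 odd_double.
    - by move=> x xin; rewrite Hpar.
    by move=> p pin; have := Hfs p pin; rewrite fs_dunion mem_cat orbC.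
  rewrite -map_comp {1 2}tE -map_comp; apply/eq_in_map => x xin /=.
  by rewrite -[in LHS](odd_double_half (h x)) Hpar // E /d1 add1n.
apply/orP; left; apply/mapP; exists (map half t).
  apply: vh; apply: (@extract _ _ d0 false [seq (p.1, map d1 p.2) | p <- fs Y]).
  - by move=> n; rewrite /d0 doubleK.
  - by move=> q /mapP [r _ ->] m /mapP [a _ ->]; rewrite /d1 /= odd_double.
  - by move=> x xin; rewrite Hpar.
  by move=> p pin; have := Hfs p pin; rewrite fs_dunion mem_cat.
rewrite -map_comp {1 2}tE -map_comp; apply/eq_in_map => x xin /=.
by rewrite -[in LHS](odd_double_half (h x)) Hpar // E /d0 add0n.
Qed.


Section Inst.
Variables D D' : instance s.

Fixpoint einst (e : expr) : instance s :=
  match e with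
  | E0 => empty | EZ => prod D D' | ED => D | ED' => D'
  | Eplus e1 e2 => dunion (einst e1) (einst e2)
  | Etimes e1 e2 => prod (einst e1) (einst e2)
  end.

Lemma einst_count F e : connected F -> adom F != [::] ->
  homN F (einst e) = eval (homN F D) (homN F D') e.
Proof.
move=> cF ne; elim: e => //= [||e1 IH1 e2 IH2|e1 IH1 e2 IH2].
- exact: homN_empty_tgt.
- exact: homN_prod.
- by rewrite homN_dunion // IH1 IH2.
by rewrite homN_prod IH1 IH2.
Qed.

Lemma good_map e T : good e -> homB D T \/ homB D' T -> homB (einst e) T.
Proof.
move=> + HT; elim: e => //= [||e1 IH1 e2 IH2|e1 IH1 e2 IH2].
- by move=> _; exact: homB_empty.
- by move=> _; case: HT => H; [apply: homB_prodL | apply: homB_prodR].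
- by case/andP => /IH1 H1 /IH2 H2; apply: homB_dunion_src.
by case/orP => [/IH1 H|/IH2 H]; [apply: homB_prodL | apply: homB_prodR].
Qed.

Lemma emul_map n e T : homB (einst e) T -> homB (einst (emul n e)) T.
Proof.
move=> H; elim: n => [|n IH] /=; first exact: homB_empty.
exact: homB_dunion_src.
Qed.

End Inst.

Lemma map_eq_In (T U : Type) (f g : T -> U) (l : seq T) :
  (forall x, List.In x l -> f x = g x) -> map f l = map g l.
Proof. elim: l => //= x l IH H; rewrite H ?IH //; [move=> y Hy; apply: H|]; tauto. Qed.

Lemma In_map_eq (T U : Type) (f g : T -> U) (l : seq T) :
  map f l = map g l -> forall x, List.In x l -> f x = g x.
Proof. elim: l => //= x l IH [e1 e2] y [<-|Hy] //; exact: IH. Qed.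

Lemma mem_map_In (T : Type) (U : eqType) (f : T -> U) (l : seq T) y :
  y \in map f l -> exists x, List.In x l /\ y = f x.
Proof.
elim: l => //= x l IH; rewrite inE => /orP [/eqP ->|/IH [z [zin ->]]].
  by exists x; split; [left|].
by exists z; split; [right|].
Qed.

Lemma In_mem_map (T : Type) (U : eqType) (f : T -> U) (l : seq T) x :
  List.In x l -> f x \in map f l.
Proof. elim: l => //= z l IH [<-|H]; rewrite inE ?eqxx //; by rewrite IH ?orbT. Qed.

Lemma key (F : seq (instance s)) D D' : List.Forall (@connected s) F ->
  homB_vec F D = homB_vec F D' ->
  exists G G', [/\ hom_equiv D G, hom_equiv D' G' & homN_vec F G = homN_vec F G'].
Proof.
move=> /List.Forall_forall cF eB.
pose ps := [seq (homN Fi D, homN Fi D') | Fi <- F].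
have Hps : forall p, p \in ps -> (p.1 == 0) = (p.2 == 0).
  move=> p /mem_map_In [Fi [Fin ->]] /=.
  have := In_map_eq eB Fin; rewrite !homB_homN.
  by rewrite !eqn0Ngt => ->.
have [L [U [W [L0 gU gW E]]]] := solve Hps.
case: L L0 E => // L _ E.
exists (einst D D' (Eplus (emul L.+1 ED) U)), (einst D D' (Eplus (emul L.+1 ED') W)).
split.
- split.
    by apply: homB_trans (homB_d0 _ _); apply: homB_d0.
  apply: homB_dunion_src; first exact: (@emul_map D D' L.+1 ED D (homB_refl D)).
  by apply: good_map => //; left; exact: homB_refl.
- split.
    by apply: homB_trans (homB_d0 _ _); apply: homB_d0.
  apply: homB_dunion_src; first exact: (@emul_map D D' L.+1 ED' D' (homB_refl D')).
  by apply: good_map => //; right; exact: homB_refl.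
apply: map_eq_In => Fi Fin.
case: (eqVneq (adom Fi) [::]) => ne.
  by rewrite !homN_empty_src.
have cFi := cF Fi Fin.
rewrite !einst_count // !eval_plus !eval_emul /=.
exact: (E _ (In_mem_map (fun Fi => (homN Fi D, homN Fi D')) Fin)).
Qed.

End Work.

Theorem mainTheorem10 (s : schema) (C : instance s -> Prop)
  (HC : closed_hom_equiv C) (F : seq (instance s))
  (HF : List.Forall (@connected s) F) :
  (exists X : seq nat -> Prop, left_qa_N C F X) <->
  (exists X' : seq bool -> Prop, left_qa_B C F X').
Proof.
split.
  move=> [X HX]; exists (fun bv => exists D0, C D0 /\ homB_vec F D0 = bv).
  move=> D; split; first by move=> CD; exists D.
  move=> [D0 [C0 e]].
  have [G [G' [[e1 e2] [e3 e4] eN]]] := key HF e.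
  have CG : C G by apply: HC C0 _; split.
  have : C G' by apply/HX; rewrite -eN; apply/HX.
  by move=> CG'; apply: HC CG' _; split.
move=> [X' HX']; exists (fun v => X' (map (fun n => 0 < n) v)).
move=> D; rewrite HX'.
suff -> : homB_vec F D = [seq 0 < n | n <- homN_vec F D] by [].
by rewrite /homB_vec /homN_vec -map_comp; apply: eq_map => Fi /=; rewrite homB_homN.
Qed.
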